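(* Let $x,y\in X$ with $\deg(x)=\deg(y)=i$ for some positive integer $i$, and assume there are integers $n>i+2$ and $k\geq1$ such that $T^j(x)_n=T^j(y)_n$ for all $j\geq k$ and the infinite path $\big(T^j(x)_n\big)_{j\geq k}$ in $G_n$ begins with the cycle $c_{n,i}$ (that is, $\big(T^{k+t}(x)_n\big)_{t=0}^{|c_{n,i}|}$ is exactly the cycle $c_{n,i}$). Then $T^j(x)_n=T^j(y)_n$ for all $j\geq0$.
   Context: Paths and cycles: a graph is $G=(V,E)$ with $V$ finite and $E\subset V\times V$. A path is a finite sequence of vertices $(u_0,\dots,u_L)$ with $(u_j,u_{j+1})\in E$; its length is $|\cdot|=L$; a cycle is a path with $u_0=u_L$. For paths where one ends where the next starts, $+$ denotes concatenation and $a\,c$ means the cycle $c$ traversed $a$ times. Construction: $G_0=(V_0,E_0)$ with $V_0=\{v_{0,0}\}$, $E_0=\{e_{0,0}\}$, $e_{0,0}=(v_{0,0},v_{0,0})$. For $n\geq1$, $G_n=(V_n,E_n)$ consists of a vertex $v_{n,0}$, the loop $e_{n,0}=(v_{n,0},v_{n,0})$, and $n$ cycles $c_{n,1},\dots,c_{n,n}$, each starting and ending at $v_{n,0}$, whose vertices other than $v_{n,0}$ are pairwise distinct (within each cycle and across cycles); $V_n$ is the set of all these vertices and $E_n$ consists of $e_{n,0}$ and the edges of the cycles. The maps $\varphi_n\colon V_{n+1}\to V_n$ and the lengths of the cycles $c_{n+1,i}$ are defined together: $\varphi_n(v_{n+1,0})=v_{n,0}$, and for each $i$ a path $P_{n,i}$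 in $G_n$ from $v_{n,0}$ to $v_{n,0}$ is given; $c_{n+1,i}$ has length $|P_{n,i}|$ and $\varphi_n$ maps its $j$-th vertex to the $j$-th vertex of $P_{n,i}$ (written $\varphi_n(c_{n+1,i})=P_{n,i}$). The paths are: $P_{0,1}=10\,e_{0,0}$; for $n\geq1$: $P_{n,i}=e_{n,0}+2c_{n,i}+2c_{n,i+1}+\dots+2c_{n,n}+e_{n,0}$ for $2\leq i\leq n$; $P_{n,n+1}=(n+2)^2\big(\sum_{i=1}^n|c_{n,i}|\big)\,e_{n,0}$; and $P_{n,1}=(1\,e_{n,0}+2c_{n,1})+(2\,e_{n,0}+2c_{n,1})+\dots+(k_n\,e_{n,0}+2c_{n,1})+e_{n,0}+2c_{n,2}+\dots+2c_{n,n}+e_{n,0}$, where $k_n=2\big(1+\sum_{i=1}^n|c_{n,i}|\big)$. Let $X=\{x\in\prod_{n\geq0}V_n:\varphi_n(x_{n+1})=x_n\ \forall n\}$ with metric $d(x,y)=2^{-\min\{i:x_i\neq y_i\}}$ ($d(x,x)=0$); $X$ is a compact zero-dimensional metric space, and $T\colon X\to X$ defined by $T(x)=y$ iff $(x_n,y_n)\in E_n$ for all $n$ is a well-defined homeomorphism. Write $x_n$ for the $n$-th coordinate of $x$; for $z\in X$ the sequence $(T^j(z)_n)_{j\geq0}$ is an infinite path in $G_n$. Degree: for $v\in V_n$, $\deg(v)=+\infty$ if $v=v_{n,0}$ and $\deg(v)=i$ if $v$ is a vertex of $c_{n,i}$ different from $v_{n,0}$; for $x\in X$, $\deg(x)=\min_n\deg(x_n)$.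 *)

(* Defs.v *)
From mathcomp Require Import all_boot.
Set Implicit Arguments. Unset Strict Implicit. Unset Printing Implicit Defensive.

(* Vertices of every G_n are encoded as pairs of naturals:
   (0,0)  is the distinguished vertex v_{n,0};
   (i,j)  with 1 <= i <= n and 1 <= j < |c_{n,i}| is the j-th vertex of c_{n,i}. *)
Definition V := (nat * nat)%type.
Definition v0 : V := (0, 0).

(* A path starting at v_{n,0} is represented by its list of vertices AFTER the
   starting vertex; hence its length is the size of the list and concatenation
   of paths is list concatenation. *)
Definition eloop : seq V := [:: v0].
Definition cyc (L i : nat) : seq V :=                          (* c_{n,i}, |c_{n,i}| = L *)
  [seq (i, j) | j <- iota 1 L.-1] ++ [:: v0].
Definition rep (a : nat) (p : seq V) : seq V := flatten (nseq a p).

(* The path P_{n,i} (tail form) given the lengths L m = |c_{n,m}| of level n. *)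
Definition Ptail (n : nat) (L : nat -> nat) (i : nat) : seq V :=
  if n is 0 then (if i == 1 then rep 10 eloop else [::]) else
  let S := \sum_(1 <= m < n.+1) L m in
  if i == 1 then
    flatten [seq rep a eloop ++ rep 2 (cyc (L 1) 1) | a <- iota 1 (2 * (1 + S))]
    ++ eloop ++ flatten [seq rep 2 (cyc (L m) m) | m <- iota 2 n.-1] ++ eloop
  else if (2 <= i <= n) then
    eloop ++ flatten [seq rep 2 (cyc (L m) m) | m <- iota i (n - i + 1)] ++ eloop
  else if i == n.+1 then rep ((n + 2) ^ 2 * S) eloop
  else [::].

(* lens n i = |c_{n,i}| *)
Fixpoint lens (n : nat) : nat -> nat :=
  match n with
  | 0 => fun _ => 0
  | n'.+1 => fun i => size (Ptail n' (lens n') i)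
  end.

Definition cycv (n i : nat) : seq V := v0 :: cyc (lens n i) i.

Definition inV (n : nat) (v : V) : Prop :=
  v = v0 \/ ((1 <= v.1 <= n) /\ (1 <= v.2 < lens n v.1)).

Definition edge (n : nat) (u w : V) : Prop :=
  (u = v0 /\ w = v0) \/
  exists i t, 1 <= i <= n /\ t < lens n i /\
              u = nth v0 (cycv n i) t /\ w = nth v0 (cycv n i) t.+1.

(* phi_n : V_{n+1} -> V_n : the j-th vertex of c_{n+1,i} goes to the j-th
   vertex of P_{n,i}. *)
Definition phi (n : nat) (v : V) : V :=
  if v == v0 then v0 else nth v0 (v0 :: Ptail n (lens n) v.1) v.2.

Definition inX (x : nat -> V) : Prop :=
  forall n, inV n (x n) /\ phi n (x n.+1) = x n.

(* xs is the T-orbit of xs 0: xs j = T^j(xs 0), where T(x) = y iff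
   (x_n, y_n) in E_n for all n. *)
Definition is_orbit (xs : nat -> nat -> V) : Prop :=
  (forall j, inX (xs j)) /\ (forall j n, edge n (xs j n) (xs j.+1 n)).

(* Degree: deg(v) = +oo (None) for v_{n,0}, i (Some i) for a vertex of c_{n,i}. *)
Definition vdeg (v : V) : option nat := if v.1 == 0 then None else Some v.1.

Definition deg_is (x : nat -> V) (i : nat) : Prop :=
  (exists n, vdeg (x n) = Some i) /\ (forall n m, vdeg (x n) = Some m -> i <= m).

(* Main.v *)
Require Import Defs.
From mathcomp Require Import all_boot zify.

Definition good (k : nat) (l : seq V) := forall j, (nth v0 l j).2 <= j + k.

Lemma good_nil k : good k [::].
Proof. by move=> j; rewrite nth_nil. Qed.

Lemma good_cat k l1 l2 : good k l1 -> good k l2 -> good k (l1 ++ l2).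
Proof.
move=> h1 h2 j; rewrite nth_cat; case: ifP => _; first exact: h1.
have := h2 (j - size l1); lia.
Qed.

Lemma good_flatten_map k (T : Type) (f : T -> seq V) s :
  (forall x, good k (f x)) -> good k (flatten (map f s)).
Proof.
move=> h; elim: s => [|x s IH] /=; first exact: good_nil.
exact: good_cat.
Qed.

Lemma good_rep k a l : good k l -> good k (rep a l).
Proof.
move=> h; rewrite /rep; elim: a => [|a IH] /=; first exact: good_nil.
exact: good_cat.
Qed.

Lemma good_eloop k : good k eloop.
Proof. by move=> [|j] /=; rewrite ?nth_nil. Qed.

Lemma nth_cyc L m j : nth v0 (cyc L m) j = if j < L.-1 then (m, j.+1) else v0.
Proof.
rewrite /cyc nth_cat size_map size_iota; case: ifP => h.
  by rewrite (nth_map 0) ?size_iota // nth_iota.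
by case: (j - L.-1) => //= ?; rewrite nth_nil.
Qed.

Lemma good_cyc L m : good 1 (cyc L m).
Proof. move=> j; rewrite nth_cyc; case: ifP => //= _; lia. Qed.

Lemma good0_cons l : good 1 l -> good 0 (v0 :: l).
Proof. move=> h [|j] //=; have := h j; lia. Qed.

Lemma good_v0s k a : good k (rep a eloop).
Proof. apply: good_rep; exact: good_eloop. Qed.

Lemma good_cons k l : good k l -> good k (v0 :: l).
Proof. move=> h [|j] //=; have := h j; lia. Qed.

Ltac sgood := repeat first [ apply: good_cyc | apply: good_eloop | apply: good_cat | apply: good_flatten_map => ? | apply: good_rep
  | apply: good_cons | apply: good_eloop | apply: good_cyc | apply: good_nil ].

Lemma PG N L m : good 0 (Ptail N L m).
Proof.
case: N => [|N] /=.
  case: ifP => _; [exact: good_v0s | exact: good_nil].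
case: ifP => [_|_].
  apply: good0_cons; sgood.
case: ifP => [_|_].
  apply: good0_cons; sgood.
case: ifP => _; [exact: good_v0s | exact: good_nil].
Qed.

Lemma all_flatten_map (T : eqType) (p : pred V) (f : T -> seq V) s :
  (forall x, x \in s -> all p (f x)) -> all p (flatten (map f s)).
Proof.
elim: s => [|x s IH] h //=; rewrite all_cat h ?mem_head //.
by apply: IH => y hy; apply: h; rewrite in_cons hy orbT.
Qed.

Lemma all_rep p a l : all p l -> all p (rep a l).
Proof. move=> h; rewrite /rep; elim: a => [|a IH] //=; by rewrite all_cat h. Qed.

Lemma all_cyc (p : pred V) L m : p v0 -> (forall j, p (m, j)) -> all p (cyc L m).
Proof.
move=> h0 h; rewrite /cyc all_cat all_map; apply/andP; split; last by rewrite /= h0.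
apply/allP => j _ /=; exact: h.
Qed.

Ltac sall := repeat first [ match goal with |- is_true (all _ (_ :: _)) => apply/andP; split end | apply: all_cyc | apply: all_rep | apply: all_flatten_map => ? ?
  | rewrite all_cat; apply/andP; split | done ].

Ltac finmem := try (match goal with H : is_true (_ \in iota _ _) |- _ => rewrite mem_iota in H end);
  move=> ? /=; try (apply/orP; right); lia.

Lemma PC N L m : all (fun e => (e == v0) || (m <= e.1)) (Ptail N L m).
Proof.
case: N => [|N]; rewrite /Ptail; cbv beta iota zeta.
  by case: ifP => _ //; sall.
case: ifP => [/eqP ->|_].
  by sall; finmem.
case: ifP => [_|_].
  by sall; finmem.
by case: ifP => _ //; sall.
Qed.
Lemma Pmid N L m : 1 <= m <= N -> exists rest, Ptail N L m = v0 :: cyc (L m) m ++ cyc (L m) m ++ rest.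
Proof.
case: N => [|N] hm; first by lia.
rewrite /Ptail; cbv beta iota zeta.
case: ifP => [/eqP ->|/eqP hm1].
  set S := \sum_(_ <= _ < _) _.
  have -> : 2 * (1 + S) = (2*S+1).+1 by lia.
  rewrite /= /rep /=; eexists; rewrite -!catA; reflexivity.
case: ifP => [hm2|/negbT hm2]; last by lia.
have -> : N.+1 - m + 1 = (N.+1 - m).+1 by lia.
rewrite /= /rep /=; eexists; rewrite -!catA; reflexivity.
Qed.

Lemma nth_allv0 l j : all (pred1 v0) l -> nth v0 l j = v0.
Proof.
move=> h; case: (ltnP j (size l)) => hj; last by rewrite nth_default.
by move/all_nthP: h => /(_ v0 j hj) /eqP.
Qed.

Definition lv (l : seq V) := last v0 l = v0.
Lemma lv_cat l1 l2 : lv l1 -> lv l2 -> lv (l1 ++ l2).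
Proof. by rewrite /lv last_cat => ->. Qed.
Lemma lv_flatten_map (T : Type) (f : T -> seq V) s : (forall x, lv (f x)) -> lv (flatten (map f s)).
Proof. move=> h; elim: s => [|x s IH] //=; exact: lv_cat. Qed.
Lemma lv_rep a l : lv l -> lv (rep a l).
Proof. move=> h; rewrite /rep; elim: a => [|a IH] //=; exact: lv_cat. Qed.
Lemma lv_cyc L m : lv (cyc L m).
Proof. by rewrite /lv /cyc last_cat. Qed.
Lemma lv_eloop : lv eloop. Proof. by []. Qed.
Ltac slv := repeat first [ apply: lv_cyc | apply: lv_eloop | apply: lv_rep | apply: lv_flatten_map => ?
  | apply: lv_cat ].

Lemma Qend A : lv A -> nth v0 (v0 :: (A ++ eloop)) (size (A ++ eloop)).-1 = v0.
Proof.
rewrite size_cat addn1 /= => h.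
rewrite -cat_cons nth_cat /= ltnSn.
have := nth_last v0 (v0 :: A); rewrite /= => ->; exact: h.
Qed.

Lemma PLast N L m : nth v0 (v0 :: Ptail N L m) (size (Ptail N L m)).-1 = v0.
Proof.
case: N => [|N]; rewrite /Ptail; cbv beta iota zeta.
  by case: ifP => _ //; apply: nth_allv0; rewrite /=; sall.
case: ifP => [_|_].
  rewrite !catA; apply: Qend; slv.
case: ifP => [_|_].
  rewrite !catA; apply: Qend; slv.
by case: ifP => _ //; apply: nth_allv0; rewrite /=; sall.
Qed.

Lemma Pdec N L i : 1 <= i -> i.+1 <= N ->
  exists A C, Ptail N L i = A ++ cyc (L i.+1) i.+1 ++ C /\
    all (fun e => e.1 <= i) (v0 :: A) /\ all (fun e => (e.1 == 0) || (i < e.1)) C.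
Proof.
move=> hi hN; case: N hN => [|N] hN //; rewrite /Ptail; cbv beta iota zeta.
case: ifP => [/eqP ei|/eqP ni].
  subst i; case: N hN => [|N] hN //.
  have hF : flatten [seq rep 2 (cyc (L m0) m0) | m0 <- iota 2 N.+2.-1] =
    cyc (L 2) 2 ++ cyc (L 2) 2 ++ flatten [seq rep 2 (cyc (L m0) m0) | m0 <- iota 3 N].
    by rewrite /= /rep /= cats0 -catA.
  rewrite hF.
  match goal with |- exists A C, ?X ++ eloop ++ (?c ++ ?d) ++ eloop = _ /\ _ =>
    exists (X ++ eloop), (d ++ eloop) end.
  split; first by rewrite -!catA.
  split.
    rewrite /= all_cat; apply/andP; split; last by [].
    by sall; move=> j /=; lia.
  by sall; finmem.
case: ifP => [hi2|/negbT hi2]; last by lia.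
have -> : N.+1 - i + 1 = (N.+1 - i.+1).+2 by lia.
pose F := flatten [seq rep 2 (cyc (L m) m) | m <- iota i.+2 (N.+1 - i.+1)].
have -> : flatten [seq rep 2 (cyc (L m) m) | m <- iota i (N.+1 - i.+1).+2] =
   cyc (L i) i ++ cyc (L i) i ++ cyc (L i.+1) i.+1 ++ cyc (L i.+1) i.+1 ++ F.
  by rewrite /= /rep /= !cats0 -!catA.
exists (eloop ++ cyc (L i) i ++ cyc (L i) i), ((cyc (L i.+1) i.+1 ++ F) ++ eloop).
split; first by rewrite -!catA.
split; first by rewrite -cat_cons all_cat; apply/andP; split; last by sall; move=> j /=; lia.
by sall; finmem.
Qed.


Lemma size_cyc L m : size (cyc L m) = L.-1.+1.
Proof. by rewrite /cyc size_cat size_map size_iota addn1. Qed.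

Lemma Pidx N L i : 1 <= i -> i.+1 <= N -> 2 <= L i.+1 ->
  exists q, 0 < q < size (Ptail N L i) /\ nth v0 (v0 :: Ptail N L i) q = (i.+1, 1) /\
   (forall j, j < q -> (nth v0 (v0 :: Ptail N L i) j).1 <= i) /\
   (forall j, q <= j -> (nth v0 (v0 :: Ptail N L i) j).1 != i).
Proof.
move=> hi hN hL; have [A [C [-> [hA hC]]]] := @Pdec N L i hi hN.
have e : v0 :: A ++ cyc (L i.+1) i.+1 ++ C = (v0 :: A) ++ (cyc (L i.+1) i.+1 ++ C) by [].
have hB : all (fun e => (e.1 == 0) || (i < e.1)) (cyc (L i.+1) i.+1 ++ C).
  rewrite all_cat hC andbT; apply: all_cyc => // j /=; lia.
exists (size A).+1; rewrite e; split.
  rewrite size_cat [size (_ ++ C)]size_cat size_cyc; lia.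
split.
  rewrite nth_cat /= ltnn subnn nth_cat size_cyc /= nth_cyc ifT //; lia.
split.
  move=> j hj; rewrite nth_cat /= hj.
  by move/all_nthP: hA => /(_ v0 j hj).
move=> j hj; rewrite nth_cat /= ltnNge hj /=.
case: (ltnP (j - (size A).+1) (size (cyc (L i.+1) i.+1 ++ C))) => h.
  move/all_nthP: hB => /(_ v0 _ h); set x := (nth _ _ _).1; case/orP => [/eqP ->|hx]; apply/eqP; lia.
by rewrite nth_default //; apply/eqP => /= h0; lia.
Qed.

Lemma size_rep a l : size (rep a l) = a * size l.
Proof. rewrite /rep; elim: a => [|a IH] //=; rewrite size_cat IH mulSn //. Qed.

Lemma lens_lt N m : 1 <= m <= N -> lens N m < lens N.+1 m.
Proof.
move=> hm; rewrite [lens N.+1 m]/=.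
have [rest ->] := Pmid N (lens N) m hm.
rewrite /= size_cat (size_cat (cyc _ _)) size_cyc; lia.
Qed.

Lemma Ptail_top N L : 1 <= N -> Ptail N L N.+1 = rep ((N + 2) ^ 2 * \sum_(1 <= m < N.+1) L m) eloop.
Proof.
case: N => [|N] // _; rewrite /Ptail; cbv beta iota zeta.
case: ifP => [/eqP|_]; first lia.
by rewrite eqxx. Qed.
Lemma lens_ge2 N m : 1 <= m <= N -> 2 <= lens N m.
Proof.
elim: N m => [|N IH] m hm; first lia.
case: (ltnP m N.+1) => hmN.
  have h1 : 1 <= m <= N by lia.
  have := lens_lt N m h1; have := IH m h1; lia.
have em : m = N.+1 by lia.
subst m; case: N IH hm hmN => [|N] IH hm hmN; first by [].
rewrite -[lens N.+2 N.+2]/(size (Ptail N.+1 (lens N.+1) N.+2)) Ptail_top // size_rep /=.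
rewrite big_ltn // -[size (Ptail N (lens N) 1)]/(lens N.+1 1); have := IH 1 isT.
set a := (_ ^ 2); have : 0 < a by rewrite expn_gt0. nia.
Qed.

Lemma lens_mono n d m : 1 <= m <= n -> lens n m + d <= lens (n + d) m.
Proof.
move=> hm; elim: d => [|d IH]; first by rewrite !addn0.
have h1 : 1 <= m <= n + d by lia.
have := lens_lt (n + d) m h1; rewrite (addnS n d); lia.
Qed.

Lemma nth_cycv N m t : nth v0 (cycv N m) t = if (0 < t) && (t < lens N m) then (m, t) else v0.
Proof.
rewrite /cycv; case: t => [|t] //=; rewrite nth_cyc.
by case: (lens N m) => [|L] //=.
Qed.

Lemma E1 N a b : edge N a b -> a != v0 -> exists m r, [/\ a = (m, r), 1 <= m <= N, 0 < r < lens N m &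
  b = if r.+1 < lens N m then (m, r.+1) else v0].
Proof.
case=> [[-> _]|[m [t [hm [ht [ha hb]]]]]]; first by rewrite eqxx.
rewrite !nth_cycv in ha hb; move: ha; case: ifP => h ha; last by rewrite ha eqxx.
move=> _; exists m, t; split => //.
Qed.

Lemma E2 N b : edge N v0 b -> b = v0 \/ exists m, [/\ 1 <= m <= N, 1 < lens N m & b = (m, 1)].
Proof.
case=> [[_ ->]|[m [t [hm [ht [ha hb]]]]]]; first by left.
rewrite !nth_cycv in ha hb; move: ha; case: ifP => h ha.
  by case: ha => e; lia.
have t0 : t = 0 by lia.
subst t; move: hb => /=; case: ifP => h2 ->; [right; exists m; split => // | by left].
Qed.

Lemma E3 N a b : edge N a b -> b.2 <= a.2 + 1.
Proof.
case=> [[-> ->]|[m [t [hm [ht [ha hb]]]]]] //.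
rewrite !nth_cycv in ha hb; subst a b.
case: ifP => h1 /=; case: ifP => h2 /=; lia.
Qed.

Lemma E4 N a b : edge N a b -> b != v0 -> exists m r, [/\ b = (m, r.+1), 1 <= m <= N, r.+1 < lens N m &
  a = if 0 < r then (m, r) else v0].
Proof.
case=> [[_ ->]|[m [t [hm [ht [ha hb]]]]]]; first by rewrite eqxx.
rewrite !nth_cycv in ha hb; move: hb; case: ifP => h hb; last by rewrite hb eqxx.
move=> _; exists m, t; split => //.
rewrite ha; case: t {ha hb ht} h => [|t] h //=.
rewrite ifT //; lia.
Qed.

Lemma neq_v0 m r : 0 < m -> (m, r) != v0.
Proof. by move=> h; apply/eqP; case=> e; lia. Qed.

Lemma PE N m r : 1 <= m <= N -> 0 < r < lens N m -> phi N (m, r.+1) = (m, r).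
Proof.
move=> hm hr; rewrite /phi ifN; last by apply: neq_v0; lia.
have [rest e] := Pmid N (lens N) m hm.
rewrite /= e; case: r hr => [|r] hr; first lia.
rewrite /= nth_cat size_cyc ifT; last lia.
rewrite nth_cyc ifT //; lia.
Qed.

Lemma phi_lt N w : phi N w != v0 -> (phi N w).2 < w.2.
Proof.
rewrite /phi; case: ifP => // _; case: w => a b /=; case: b => [|b] //= h.
have := PG N (lens N) a b; lia.
Qed.

Lemma phi_ge N w : phi N w != v0 -> w.1 <= (phi N w).1.
Proof.
rewrite /phi; case: ifP => // _; case: w => a b /=; case: b => [|b] //= h.
case: (ltnP b (size (Ptail N (lens N) a))) => hb; last by rewrite nth_default // eqxx in h.
have := PC N (lens N) a; move/all_nthP => /(_ v0 b hb).
by case/orP => [/eqP e|//]; rewrite e eqxx in h.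
Qed.

Lemma neq_v0' m r : 0 < r -> (m, r) != v0.
Proof. by move=> h; apply/eqP; case=> _ e; lia. Qed.

Lemma phi_v0 N : phi N v0 = v0.
Proof. by []. Qed.

Lemma proj_v0 xs : is_orbit xs -> forall j N d, xs j (N + d) = v0 -> xs j N = v0.
Proof.
move=> [hX hE] j N; elim=> [|d IH]; first by rewrite addn0.
move=> h; apply: IH; have [_ <-] := hX j (N + d).
by rewrite -addnS h.
Qed.

Lemma proj_eq xs ys : is_orbit xs -> is_orbit ys ->
  forall j N d, xs j (N + d) = ys j (N + d) -> xs j N = ys j N.
Proof.
move=> [hX hE] [hY hF] j N; elim=> [|d IH]; first by rewrite addn0.
move=> h; apply: IH; have [_ <-] := hX j (N + d); have [_ <-] := hY j (N + d).
by rewrite -addnS h.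
Qed.

Lemma G2 xs : is_orbit xs -> forall j N d, xs j N != v0 -> (xs j N).2 + d <= (xs j (N + d)).2.
Proof.
move=> hx j N; elim=> [|d IH] h; first by rewrite !addn0.
have h1 : xs j (N + d) != v0.
  by apply/eqP => e; rewrite (@proj_v0 _ hx _ _ _ e) eqxx in h.
have := IH h; have [_ e] := hx.1 j (N + d).
rewrite -e in h1 *; have := phi_lt _ _ h1; rewrite (addnS N d); lia.
Qed.

Lemma C2 xs : is_orbit xs -> forall j N d, xs j N != v0 -> (xs j (N + d)).1 <= (xs j N).1.
Proof.
move=> hx j N; elim=> [|d IH] h; first by rewrite !addn0.
have h1 : xs j (N + d) != v0.
  by apply/eqP => e; rewrite (@proj_v0 _ hx _ _ _ e) eqxx in h.
have := IH h; have [_ e] := hx.1 j (N + d).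
rewrite -e in h1 *; have := phi_ge _ _ h1; rewrite (addnS N d); lia.
Qed.

Lemma chainE xs : is_orbit xs -> forall j n d m r, xs j (n + d) = (m, r + d) -> 1 <= m <= n ->
  0 < r < lens n m -> xs j n = (m, r).
Proof.
move=> hx j n; elim=> [|d IH] m r h hm hr; first by rewrite !addn0 in h.
apply: IH => //; have [_ <-] := hx.1 j (n + d).
rewrite -addnS h addnS PE //; first lia.
have := lens_mono n d m hm; lia.
Qed.

Lemma inV_pos xs : is_orbit xs -> forall j N, xs j N != v0 ->
  1 <= (xs j N).1 <= N /\ 1 <= (xs j N).2 < lens N (xs j N).1.
Proof.
move=> hx j N h; have [[e|hv] _] := hx.1 j N; last by [].
by rewrite e eqxx in h.
Qed.

Lemma walk_fwd xs : is_orbit xs -> forall j N m r u, xs j N = (m, r) -> 0 < r ->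
  r + u < lens N m -> xs (j + u) N = (m, r + u).
Proof.
move=> hx j N m r; elim=> [|u IH] h hr hu; first by rewrite !addn0.
have e : xs (j + u) N = (m, r + u) by apply: IH => //; lia.
have hm : 0 < m.
  have := @inV_pos _ hx j N; rewrite h /= => /(_ (neq_v0' _ _ hr)); lia.
have he := hx.2 (j + u) N; rewrite e in he.
have [m' [r' [[em er] hm' hr' hb]]] := E1 _ _ _ he (neq_v0 m (r+u) hm).
subst m' r'; rewrite (addnS j u) hb ifT; [by rewrite addnS | lia].
Qed.

Lemma walk_bwd xs : is_orbit xs -> forall j N u m r, xs (j + u) N = (m, r) -> u <= r -> 0 < r ->
  xs j N = if u < r then (m, r - u) else v0.
Proof.
move=> hx j N; elim=> [|u IH] m r h hu hr; first by rewrite addn0 in h; rewrite hr subn0.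
have he := hx.2 (j + u) N; rewrite -addnS h in he.
have [m' [r' [[em er] hm' hr' ha]]] := E4 _ _ _ he (neq_v0' _ _ hr).
subst m' r; move: ha; case: ifP => hr0 ha.
  rewrite (IH m r' ha); [|lia|lia].
  by rewrite ltnS subSS.
move: ha h he; case: u {IH} hu => [|u] hu ha h he; last lia.
have e0 : r' = 0 by case: (r') hr0.
by subst; rewrite addn0 in ha.
Qed.

Lemma PLast' N m r : 1 <= m -> r.+1 = lens N.+1 m -> phi N (m, r) = v0.
Proof.
move=> hm hr; rewrite /phi ifN; last exact: neq_v0.
have := PLast N (lens N) m; rewrite -[size (Ptail N (lens N) m)]/(lens N.+1 m) -hr /=.
done.
Qed.

Lemma deg_lb xs i : is_orbit xs -> deg_is (xs 0) i -> forall j N, xs j N = v0 \/ i <= (xs j N).1.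
Proof.
move=> hx [[N0 hN0] hlb].
have h0 : xs 0 N0 != v0 by apply/eqP => e; rewrite e in hN0.
have hd : forall N, xs 0 N != v0 -> i <= (xs 0 N).1.
  move=> N hN; apply: (hlb N); rewrite /vdeg.
  have := @inV_pos _ hx 0 N hN; case: ifP => [/eqP e|_] //; rewrite e; lia.
have A : forall d j, j <= d -> xs j (N0 + d) != v0 /\ (xs j (N0 + d)).1 = (xs 0 (N0 + d)).1.
  elim=> [|d IH] j hj.
    have -> : j = 0 by lia.
    by rewrite addn0; split.
  have hz : xs 0 (N0 + d.+1) != v0.
    by apply/eqP => e; rewrite (@proj_v0 _ hx _ _ _ e) eqxx in h0.
  elim: j hj => [|j IHj] hj; first by split.
  have [IH1 IH2] := IHj (ltnW hj).
  have [m [r [ea hm hr eb]]] := E1 _ _ _ (hx.2 j (N0 + d.+1)) IH1.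
  move: eb; case: ifP => hrL eb.
    by rewrite eb -IH2 ea; split => //; apply: neq_v0; lia.
  exfalso; have [IHa _] := IH j hj.
  have hL : r.+1 = lens (N0 + d).+1 m.
    move/negbT: hrL; rewrite -leqNgt -addnS; lia.
  have := (hx.1 j (N0 + d)).2; rewrite -addnS ea (PLast' _ _ _ _ hL); last lia.
  by move=> e; rewrite -e eqxx in IHa.
move=> j N; case: (eqVneq (xs j N) v0) => hj; first by left.
right; have [h1 h2] := A (N + j) j (leq_addl _ _).
have [h5 _] := A (N + j) 0 (leq0n _).
have h3 := @C2 _ hx j N (N0 + j) hj.
have e : N0 + (N + j) = N + (N0 + j) by lia.
rewrite e in h1 h2 h5.
have := hd _ h5; lia.
Qed.

Lemma Efwd xs : is_orbit xs -> forall n d T m, 1 <= m <= n -> xs T.+1 (n + d) = (m, 1) ->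
  xs (T + d.+1) n = (m, 1).
Proof.
move=> hx n d T m hm h.
have hL := lens_mono n d m hm; have h2 := lens_ge2 n m hm.
have hw : 1 + d < lens (n + d) m by lia.
have w := @walk_fwd _ hx T.+1 (n + d) m 1 d h isT hw.
rewrite -addSnnS; apply: (@chainE _ hx _ n d m 1) => //; lia.
Qed.

Lemma Rec ys : is_orbit ys -> forall n d T m, 1 <= m <= n -> ys T (n + d) = v0 ->
  ys (T + d.+1) n = (m, 1) -> ys T.+1 (n + d) = (m, 1).
Proof.
move=> hy n d T m hm h0 h1.
have ha : forall u, (ys (T + u) (n + d)).2 <= u.
  elim=> [|u IH]; first by rewrite addn0 h0.
  have := E3 _ _ _ (hy.2 (T + u) (n + d)); rewrite -addnS; lia.
have hb : forall u v, (ys (T + u + v) (n + d)).2 <= (ys (T + u) (n + d)).2 + v.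
  move=> u; elim=> [|v IH]; first by rewrite !addn0.
  have := E3 _ _ _ (hy.2 (T + u + v) (n + d)); rewrite -addnS; lia.
have hc : d.+1 <= (ys (T + d.+1) (n + d)).2.
  have := @G2 _ hy (T + d.+1) n d; rewrite h1 => /(_ (neq_v0' m 1 isT)) /=; lia.
have hex : forall u, u <= d.+1 -> (ys (T + u) (n + d)).2 = u.
  move=> u hu; have := ha u; have := hb u (d.+1 - u).
  have -> : T + u + (d.+1 - u) = T + d.+1 by lia.
  lia.
have [e0|[m'' [hm'' hL e1]]] := E2 _ _ (eq_ind _ (fun a => edge _ a _) (hy.2 T (n + d)) _ h0).
  by have := hex 1 isT; rewrite addn1 e0.
have hw : forall u, u <= d -> ys (T + u.+1) (n + d) = (m'', u.+1).
  elim=> [|u IH] hu; first by rewrite addn1.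
  have e := IH (ltnW hu).
  have [m3 [r3 [ea3 _ _ hb3]]] := E1 _ _ _ (hy.2 (T + u.+1) (n + d)) (eq_ind_r (fun a => a != v0) (neq_v0' m'' u.+1 isT) e).
  rewrite e in ea3; case: ea3 => em3 er3; subst m3 r3.
  move: hb3; rewrite -addnS; case: ifP => // _ e3.
  by have := hex u.+2 hu; rewrite e3.
have e := hw d (leqnn d).
have := @C2 _ hy (T + d.+1) n d; rewrite h1 e => /(_ (neq_v0' m 1 isT)) /= hmm.
have := (@chainE _ hy (T + d.+1) n d m'' 1); rewrite e add1n => /(_ erefl).
have hm3 : 1 <= m'' <= n by lia.
move=> /(_ hm3); rewrite h1 => h; have h' := lens_ge2 n m'' hm3.
have h4 : 0 < 1 < lens n m'' by lia.
by case: (h h4) => ->.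
Qed.

Lemma Transfer xs ys n d T m : is_orbit xs -> is_orbit ys -> 1 <= m <= n ->
  xs (T + d.+1) n = ys (T + d.+1) n -> ys T (n + d) = v0 -> xs T.+1 (n + d) = (m, 1) ->
  ys T.+1 (n + d) = (m, 1).
Proof.
move=> hx hy hm hag h0 h1.
apply: (@Rec _ hy n d T m hm h0); rewrite -hag; exact: (@Efwd _ hx n d T m hm h1).
Qed.

Lemma Align xs ys n d i s p p' : is_orbit xs -> is_orbit ys -> 1 <= i -> i.+1 <= n ->
 (forall j, s <= j -> xs j n = ys j n) ->
 xs s.+1 (n + d) = (i, 1) -> ys s.+1 (n + d) = (i, 1) ->
 xs s.+1 (n + d).+1 = (i, p) -> ys s.+1 (n + d).+1 = (i, p') -> p < p' -> False.
Proof.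
move=> hx hy hi hin hag ex1 ey1 exp eyp hpp.
have hiN : i.+1 <= n + d by lia.
have hL2 : 2 <= lens (n + d) i.+1 by apply: lens_ge2; lia.
have [q [hq [hPq [hlt hge]]]] := Pidx (n + d) (lens (n + d)) i hi hiN hL2.
set P := v0 :: Ptail (n + d) (lens (n + d)) i in hPq hlt hge.
have hq' : q < lens (n + d).+1 i by case/andP: hq.
have hpos : 0 < p < lens (n + d).+1 i.
  by have := @inV_pos _ hx s.+1 (n + d).+1; rewrite exp => /(_ (neq_v0 i p hi)) /= [_].
have hpos' : 0 < p' < lens (n + d).+1 i.
  by have := @inV_pos _ hy s.+1 (n + d).+1; rewrite eyp => /(_ (neq_v0 i p' hi)) /= [_].
have hxP : forall t, p + t < lens (n + d).+1 i -> xs (s.+1 + t) (n + d) = nth v0 P (p + t).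
  move=> t ht; have w := @walk_fwd _ hx s.+1 (n + d).+1 i p t exp (proj1 (andP hpos)) ht.
  have [_ e] := hx.1 (s.+1 + t) (n + d); rewrite -e w /phi ifN //; exact: neq_v0.
have hyP : forall t, p' + t < lens (n + d).+1 i -> ys (s.+1 + t) (n + d) = nth v0 P (p' + t).
  move=> t ht; have w := @walk_fwd _ hy s.+1 (n + d).+1 i p' t eyp (proj1 (andP hpos')) ht.
  have [_ e] := hy.1 (s.+1 + t) (n + d); rewrite -e w /phi ifN //; exact: neq_v0.
have hPp : nth v0 P p = (i, 1).
  by have := hxP 0; rewrite !addn0 => <- //; case/andP: hpos.
have hPp' : nth v0 P p' = (i, 1).
  by have := hyP 0; rewrite !addn0 => <- //; case/andP: hpos'.
have hpq : p < q.
  rewrite ltnNge; apply/negP => h; have := hge p h; rewrite hPp /= eqxx //.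
have hpq' : p' < q.
  rewrite ltnNge; apply/negP => h; have := hge p' h; rewrite hPp' /= eqxx //.
have LS : forall t, t <= q - p' -> nth v0 P (p + t) = nth v0 P (p' + t).
  elim=> [|t IH] ht; first by rewrite !addn0 hPp hPp'.
  have e := IH (ltnW ht).
  have hxt : xs (s.+1 + t) (n + d) = nth v0 P (p + t) by apply: hxP; lia.
  have hyt : ys (s.+1 + t) (n + d) = nth v0 P (p' + t) by apply: hyP; lia.
  have hxt1 : xs (s.+1 + t).+1 (n + d) = nth v0 P (p + t.+1) by rewrite -addnS; apply: hxP; lia.
  have hyt1 : ys (s.+1 + t).+1 (n + d) = nth v0 P (p' + t.+1) by rewrite -addnS; apply: hyP; lia.
  rewrite -hxt1 -hyt1.
  have exy : xs (s.+1 + t) (n + d) = ys (s.+1 + t) (n + d) by rewrite hxt hyt e.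
  have hagT : xs (s.+1 + t + d.+1) n = ys (s.+1 + t + d.+1) n by apply: hag; lia.
  case: (eqVneq (xs (s.+1 + t) (n + d)) v0) => ha.
    have hxle : (xs (s.+1 + t).+1 (n + d)).1 <= i by rewrite hxt1; apply: hlt; lia.
    have hyle : (ys (s.+1 + t).+1 (n + d)).1 <= n.
      rewrite hyt1; case: (ltnP (p' + t.+1) q) => h; first by have := hlt _ h; lia.
      have -> : p' + t.+1 = q by lia.
      by rewrite hPq /=.
    have ha' : ys (s.+1 + t) (n + d) = v0 by rewrite -exy.
    have [ex|[m [hm _ ex]]] := E2 _ _ (eq_ind _ (fun a => edge _ a _) (hx.2 _ (n + d)) _ ha).
      have [ey|[m [hm _ ey]]] := E2 _ _ (eq_ind _ (fun a => edge _ a _) (hy.2 _ (n + d)) _ ha').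
        by rewrite ex ey.
      rewrite ey; apply: (@Transfer ys xs n d) => //.
        by rewrite ey /= in hyle; lia.
    rewrite ex; symmetry; apply: (@Transfer xs ys n d) => //.
    by rewrite ex /= in hxle; lia.
  have [m1 [r1 [ea1 _ _ eb1]]] := E1 _ _ _ (hx.2 _ (n + d)) ha.
  have [m2 [r2 [ea2 _ _ eb2]]] := E1 _ _ _ (hy.2 _ (n + d)) (eq_ind _ (fun a => a != v0) ha _ exy).
  rewrite eb1 eb2; rewrite -exy ea1 in ea2; by case: ea2 => <- <-.
have := LS (q - p') (leqnn _); rewrite subnKC ?hPq; last lia.
move=> e; have := hlt (p + (q - p')); rewrite e /=.
move=> h; have := h (_ : p + (q - p') < q); lia.
Qed.

Lemma Lift xs i : is_orbit xs -> (forall j N, xs j N = v0 \/ i <= (xs j N).1) ->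
  forall s N, 1 <= i <= N -> xs s.+1 N = (i, 1) -> exists p, xs s.+1 N.+1 = (i, p) /\ 2 <= p.
Proof.
move=> hx hdeg s N hiN e.
have [_ ep] := hx.1 s.+1 N; rewrite e in ep.
have ha : xs s.+1 N.+1 != v0.
  by apply/eqP => h; rewrite h in ep.
have [h1 h2] := @inV_pos _ hx s.+1 N.+1 ha.
have hge := phi_ge _ _ (eq_ind_r (fun v => v != v0) (neq_v0 i 1 (proj1 (andP hiN))) ep).
rewrite ep /= in hge.
have [h|h] := hdeg s.+1 N.+1; first by rewrite h eqxx in ha.
move: ep ha h1 h2 hge h; case: (xs s.+1 N.+1) => a b /= ep ha h1 h2 hge h.
have ea : a = i by lia.
subst a; exists b; split => //.
case: b {ha} ep h1 h2 => [|[|b]] //= ep h1 h2.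
exfalso; move: ep; rewrite /phi ifN /=; last by apply: neq_v0; lia.
have [rest ->] := Pmid N (lens N) i hiN.
by [].
Qed.

Lemma Main xs ys n i : is_orbit xs -> is_orbit ys -> 1 <= i -> i.+1 <= n ->
  (forall j N, xs j N = v0 \/ i <= (xs j N).1) -> (forall j N, ys j N = v0 \/ i <= (ys j N).1) ->
  forall S s d, s <= S -> (forall j, s <= j -> xs j n = ys j n) ->
  xs s.+1 (n + d) = (i, 1) -> ys s.+1 (n + d) = (i, 1) -> forall j, xs j n = ys j n.
Proof.
move=> hx hy hi hin dx dy; elim=> [|S IH] s d hs hag ex ey j.
  by apply: hag; lia.
case: (posnP s) => [s0|spos]; first by apply: hag; lia.
have hiN : 1 <= i <= n + d by lia.
have [p [exp hp]] := @Lift _ _ hx dx s (n + d) hiN ex.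
have [p' [eyp hp']] := @Lift _ _ hy dy s (n + d) hiN ey.
have epp : p = p'.
  case: (ltngtP p p') => // hpp.
    by case: (@Align _ _ _ _ _ _ _ _ hx hy hi hin hag ex ey exp eyp hpp).
  by case: (@Align _ _ _ _ _ _ _ _ hy hx hi hin (fun j h => esym (hag j h)) ey ex eyp exp hpp).
subst p'.
have hback : forall j0, j0 <= s.+1 -> s.+1 - j0 <= p -> xs j0 n = ys j0 n.
  clear j; move=> j hj hjp.
  apply: (@proj_eq _ _ hx hy j n d.+1); rewrite addnS.
  have h1 := @walk_bwd _ hx j (n + d).+1 (s.+1 - j) i p.
  have h2 := @walk_bwd _ hy j (n + d).+1 (s.+1 - j) i p.
  rewrite subnKC // in h1 h2.
  rewrite (h1 exp hjp) ?(h2 eyp hjp) //; lia.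
case: (ltnP s.+1 p) => hps.
  case: (leqP s j) => hj; first exact: hag.
  apply: hback; lia.
apply: (IH (s.+1 - p) d.+1).
- lia.
- move=> j' hj'; case: (leqP s j') => hj; first exact: hag.
  apply: hback; lia.
- have h1 := @walk_bwd _ hx (s.+1 - p).+1 (n + d).+1 (p - 1) i p.
  rewrite addnS; rewrite (_ : (s.+1 - p).+1 + (p - 1) = s.+1) in h1; last lia.
  rewrite (h1 exp); [|lia|lia]; rewrite ifT; [congr (_, _); lia | lia].
- have h1 := @walk_bwd _ hy (s.+1 - p).+1 (n + d).+1 (p - 1) i p.
  rewrite addnS; rewrite (_ : (s.+1 - p).+1 + (p - 1) = s.+1) in h1; last lia.
  rewrite (h1 eyp); [|lia|lia]; rewrite ifT; [congr (_, _); lia | lia].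
Qed.

Theorem lemma3p12 (xs ys : nat -> nat -> V) (i n k : nat) :
  is_orbit xs -> is_orbit ys ->
  0 < i -> deg_is (xs 0) i -> deg_is (ys 0) i ->
  i + 2 < n -> 1 <= k ->
  (forall j, k <= j -> xs j n = ys j n) ->
  (forall t, t <= lens n i -> xs (k + t) n = nth v0 (cycv n i) t) ->
  forall j, xs j n = ys j n.
Proof.
move=> hx hy hi dgx dgy hn hk hag hcyc.
have dx := @deg_lb xs i hx dgx.
have dy := @deg_lb ys i hy dgy.
have hin : i.+1 <= n by lia.
have hL : 2 <= lens n i by apply: lens_ge2; lia.
have ex : xs k.+1 n = (i, 1).
  have := hcyc 1 (ltnW hL); rewrite addn1 nth_cycv ifT //; lia.
have ey : ys k.+1 n = (i, 1) by rewrite -hag //; lia.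
have := @Main xs ys n i hx hy hi hin dx dy k k 0 (leqnn k) hag.
by rewrite addn0 => /(_ ex ey).
Qed.
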